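(* Let $\rho$, $\sigma$, $\tau$ be non-crossing partitions of sizes $k$, $\ell$, $m$ respectively. Let $I=(i(1),\dots,i(k))$ be a leftmost occurrence of $\rho$ in $\tau$, let $J=(j(1),\dots,j(\ell))$ be a topmost occurrence of $\sigma$ in $\tau$, and let $H=(h(1),\dots,h(k+\ell))$ be any occurrence of $\rho[\sigma]$ in $\tau$. Then both $(i(1),\dots,i(k),h(k+1),\dots,h(k+\ell))$ and $(h(1),\dots,h(k),j(1),\dots,j(\ell))$ are occurrences of $\rho[\sigma]$ in $\tau$. In particular, $\tau$ contains $\rho[\sigma]$ if and only if $(i(1),\dots,i(k),j(1),\dots,j(\ell))$ is an occurrence of $\rho[\sigma]$ in $\tau$.
   Context: Set partitions are written in canonical sequential form (restricted growth words: $\pi_1=1$, $\pi_{i+1}\le\max(\pi_1,\dots,\pi_i)+1$, $\pi_j$ = index of the block of $j$, blocks ordered by minima). A partition is non-crossing if it avoids $1212$, i.e. has no indices $i<j<k<l$ with $\pi_i=\pi_k<\pi_j=\pi_l$. For partitions $\rho,\sigma$, $\rho[\sigma]$ denotes the concatenation of $\rho$ with $\sigma+r$, where $r$ is the number of blocks of $\rho$ and $\sigma+r$ adds $r$ to every letter. An occurrence of $\sigma=\sigma_1\cdots\sigma_k$ in $\tau=\tau_1\cdots\tau_n$ is a sequence $1\le i(1)<\dots<i(k)\le n$ with $\tau_{i(1)}\cdots\tau_{i(k)}$ order-isomorphic to $\sigma$. It is leftmost if $i(k)$ is minimal among all occurrences, and topmost if $\tau_{i(1)}$ is maximal among all occurrences.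 If $\sigma$ is empty, the empty sequence is its unique occurrence, both leftmost and topmost. *)

(* Defs.v *)
From mathcomp Require Import all_boot.
Set Implicit Arguments. Unset Strict Implicit. Unset Printing Implicit Defensive.

(* Words are seq nat; positions are 0-based (position p of the paper is p-1). *)

Definition wmax (s : seq nat) : nat := foldr maxn 0 s.

(* canonical sequential form: restricted growth word with letters >= 1,
   pi_1 = 1 and pi_{i+1} <= max(pi_1..pi_i) + 1 *)
Definition is_partition (s : seq nat) : Prop :=
  forall i, i < size s -> 1 <= nth 0 s i /\ nth 0 s i <= wmax (take i s) + 1.

Definition nblocks (s : seq nat) : nat := wmax s.

(* non-crossing: avoids 1212 *)
Definition noncrossing (s : seq nat) : Prop :=
  ~ exists i j k l, [/\ i < j, j < k, k < l & l < size s] /\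
      [/\ nth 0 s i = nth 0 s k, nth 0 s j = nth 0 s l & nth 0 s i < nth 0 s j].

Definition pconcat (rho sigma : seq nat) : seq nat :=
  rho ++ map (addn (nblocks rho)) sigma.

Definition order_iso (s t : seq nat) : Prop :=
  size s = size t /\
  forall a b, a < size s -> b < size s ->
    (nth 0 s a <= nth 0 s b) = (nth 0 t a <= nth 0 t b).

Definition occurrence (sigma tau : seq nat) (I : seq nat) : Prop :=
  sorted ltn I /\ all (fun i => i < size tau) I /\
  order_iso (map (nth 0 tau) I) sigma.

Definition leftmost_occ (sigma tau I : seq nat) : Prop :=
  occurrence sigma tau I /\
  forall I', occurrence sigma tau I' -> last 0 I <= last 0 I'.

Definition topmost_occ (sigma tau J : seq nat) : Prop :=
  occurrence sigma tau J /\
  forall J', occurrence sigma tau J' ->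
    nth 0 tau (head 0 J') <= nth 0 tau (head 0 J).

(* Main.v *)
Require Import Defs.
From mathcomp Require Import all_boot.
From mathcomp Require Import zify.
Set Implicit Arguments. Unset Strict Implicit. Unset Printing Implicit Defensive.

Lemma mem_nthP (s : seq nat) (x : nat) : x \in s -> exists2 i, i < size s & nth 0 s i = x.
Proof. by move/(nthP 0). Qed.

Lemma wmax_ge s x : x \in s -> x <= wmax s.
Proof.
elim: s => // a s IH; rewrite /wmax /= -/(wmax s) in_cons => /orP[/eqP->|/IH h].
  exact: leq_maxl.
exact: leq_trans h (leq_maxr _ _).
Qed.

Lemma wmax_mem s : 0 < wmax s -> wmax s \in s.
Proof.
elim: s => // a s IH; rewrite /wmax /= -/(wmax s) in_cons; case: (leqP a (wmax s)) => h.
  by move=> p; rewrite IH ?orbT.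
by rewrite eqxx.
Qed.

Lemma rg_below tau : is_partition tau -> forall p, p < size tau ->
  forall u, 0 < u -> u < nth 0 tau p -> exists2 f, f < p & nth 0 tau f = u.
Proof.
move=> Pt; elim/ltn_ind => p IH Hp u u0 ult.
have [_ Hle] := Pt p Hp.
have Hw : u <= wmax (take p tau).
  by have := leq_trans ult Hle; rewrite addn1 ltnS.
have /mem_nthP [i Hi Hnth] := wmax_mem (leq_trans u0 Hw).
rewrite size_takel ?(ltnW Hp) // in Hi.
rewrite nth_take // in Hnth.
case: (ltngtP u (nth 0 tau i)) => c.
- have [f fi ff] := IH i Hi (ltn_trans Hi Hp) u u0 c.
  by exists f => //; exact: ltn_trans fi Hi.
- by move: c; rewrite Hnth ltnNge Hw.
- by exists i.
Qed.

Lemma cross tau : is_partition tau -> noncrossing tau -> forall p h q,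
  p < h -> h < q -> q < size tau -> nth 0 tau h < nth 0 tau q ->
  nth 0 tau q <= nth 0 tau p -> False.
Proof.
move=> Pt NC p h q ph hq qs hlt qle.
have hs : h < size tau by exact: ltn_trans hq qs.
have ps : p < size tau by exact: ltn_trans ph hs.
have [c1 _] := Pt h hs.
have [f fp fq] : exists2 f, f <= p & nth 0 tau f = nth 0 tau q.
  move: qle; rewrite leq_eqVlt => /orP[/eqP e|lt]; first by exists p.
  have [f f1 f2] := rg_below Pt ps (leq_trans c1 (ltnW hlt)) lt.
  by exists f => //; exact: ltnW.
have fs : f < size tau by exact: leq_ltn_trans fp ps.
have hf : nth 0 tau h < nth 0 tau f by rewrite fq.
have [g gf gc] := rg_below Pt fs c1 hf.
apply: NC; exists g, f, h, q; split; split => //.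
- exact: leq_ltn_trans fp ph.
- by rewrite gc fq.
Qed.

Lemma iso_cat u v r s : order_iso u r -> order_iso v s ->
 (forall a b, a < size u -> b < size v -> nth 0 u a < nth 0 v b) ->
 (forall a b, a < size r -> b < size s -> nth 0 r a < nth 0 s b) ->
 order_iso (u ++ v) (r ++ s).
Proof.
move=> [su Hu] [sv Hv] cu cr; split; first by rewrite !size_cat su sv.
move=> a b; rewrite size_cat => ha hb; rewrite !nth_cat -su.
case: (ltnP a (size u)) => ha'; case: (ltnP b (size u)) => hb'.
- exact: Hu.
- have hb2 : b - size u < size v by lia.
  by rewrite (ltnW (cu _ _ ha' hb2)) (ltnW (cr _ _ _ _)) -?su -?sv.
- have ha2 : a - size u < size v by lia.
  by rewrite leqNgt (cu _ _ hb' ha2) leqNgt (cr _ _ _ _) -?su -?sv.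
- apply: Hv; lia.
Qed.

Lemma iso_split u v r s : size u = size r -> order_iso (u ++ v) (r ++ s) ->
 (forall a b, a < size r -> b < size s -> nth 0 r a < nth 0 s b) ->
 [/\ order_iso u r, order_iso v s &
   forall a b, a < size u -> b < size v -> nth 0 u a < nth 0 v b].
Proof.
move=> e [sz H] cr.
have sv : size v = size s by move: sz; rewrite !size_cat e => /eqP; rewrite eqn_add2l => /eqP.
split.
- split => // a b ha hb; have := H a b; rewrite !nth_cat -e ha hb; apply;
  rewrite size_cat; lia.
- split => // a b ha hb; have := H (size u + a) (size u + b).
  have F : forall x, (size u + x < size u) = false.
    by move=> x; rewrite ltnNge leq_addr.
  rewrite !nth_cat -e !F !addKn; apply; rewrite size_cat; lia.
- move=> a b ha hb; have := H (size u + b) a.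
  have F : (size u + b < size u) = false.
    by rewrite ltnNge leq_addr.
  rewrite !nth_cat -e F ha /= addKn => E.
  have hb' : b < size s by rewrite -sv.
  have ha' : a < size r by rewrite -e.
  rewrite ltnNge E ?size_cat; last 2 first; try lia.
  by rewrite -ltnNge; apply: cr.
Qed.

Lemma iso_shift v s N : order_iso v (map (addn N) s) <-> order_iso v s.
Proof.
split => [[sz H]|[sz H]]; rewrite ?size_map in sz; split; rewrite ?size_map // => a b ha hb.
- by have := H a b ha hb; rewrite !(nth_map 0) -?sz // leq_add2l.
- by rewrite !(nth_map 0) -?sz // leq_add2l; apply: H.
Qed.

Lemma cross_rs rho sigma : is_partition sigma ->
  forall a b, a < size rho -> b < size (map (addn (nblocks rho)) sigma) ->
  nth 0 rho a < nth 0 (map (addn (nblocks rho)) sigma) b.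
Proof.
move=> Ps a b ha; rewrite size_map => hb; rewrite (nth_map 0) //.
have [s1 _] := Ps b hb.
have := wmax_ge (mem_nth 0 ha); rewrite /nblocks => h; rewrite -addn1; exact: leq_add h s1.
Qed.

Lemma cross_mem tau X Y :
  (forall a b, a < size (map (nth 0 tau) X) -> b < size (map (nth 0 tau) Y) ->
     nth 0 (map (nth 0 tau) X) a < nth 0 (map (nth 0 tau) Y) b) <->
  (forall x y, x \in X -> y \in Y -> nth 0 tau x < nth 0 tau y).
Proof.
split.
- move=> C x y /mem_nthP[a ha <-] /mem_nthP[b hb <-].
  by have := C a b; rewrite !size_map !(nth_map 0) //; apply.
- move=> C a b; rewrite !size_map => ha hb; rewrite !(nth_map 0) //.
  by apply: C; exact: mem_nth.
Qed.

Lemma occ_split rho sigma tau H : is_partition sigma ->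
  occurrence (pconcat rho sigma) tau H ->
  [/\ occurrence rho tau (take (size rho) H),
      occurrence sigma tau (drop (size rho) H) &
      forall x y, x \in take (size rho) H -> y \in drop (size rho) H ->
        nth 0 tau x < nth 0 tau y].
Proof.
move=> Ps [so [al iso]].
have szH : size rho <= size H.
  by move: iso.1; rewrite size_map /pconcat size_cat => ->; exact: leq_addr.
have eH : H = take (size rho) H ++ drop (size rho) H by rewrite cat_take_drop.
rewrite eH map_cat in iso; rewrite eH in so al.
have e1 : size (map (nth 0 tau) (take (size rho) H)) = size rho.
  by rewrite size_map size_takel.
have [i1 i2 c] := iso_split e1 iso (cross_rs Ps).
move: c; rewrite cross_mem => c.
move: so; rewrite (sorted_pairwise ltn_trans) pairwise_cat -!(sorted_pairwise ltn_trans).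
move=> /and3P[_ s1 s2]; move: al; rewrite all_cat => /andP[a1 a2].
by split => //; split => //; split => //; move/iso_shift: i2.
Qed.

Lemma occ_join rho sigma tau X Y : is_partition sigma ->
  occurrence rho tau X -> occurrence sigma tau Y ->
  (forall x y, x \in X -> y \in Y -> x < y) ->
  (forall x y, x \in X -> y \in Y -> nth 0 tau x < nth 0 tau y) ->
  occurrence (pconcat rho sigma) tau (X ++ Y).
Proof.
move=> Ps [sX [aX iX]] [sY [aY iY]] pxy vxy; split; last split.
- rewrite (sorted_pairwise ltn_trans) pairwise_cat -!(sorted_pairwise ltn_trans).
  rewrite sX sY !andbT; apply/allrelP => x y; exact: pxy.
- by rewrite all_cat aX aY.
- rewrite map_cat; apply: iso_cat => //.
  + by apply/iso_shift.
  + by apply/cross_mem.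
  + exact: cross_rs.
Qed.

Lemma last_mem s : 0 < size s -> last 0 s \in s.
Proof. by case: s => //= a s _; exact: mem_last. Qed.

Lemma head_mem s : 0 < size s -> head 0 s \in s.
Proof. by case: s => //= a s _; exact: mem_head. Qed.

Lemma sorted_le_last s x : sorted ltn s -> x \in s -> x <= last 0 s.
Proof.
move=> so /mem_nthP[i hi <-]; rewrite -nth_last.
have so' : sorted leq s by apply: sub_sorted so => a b; exact: ltnW.
apply: (sorted_leq_nth leq_trans leqnn) => //; rewrite ?unfold_in /=; case: (size s) hi => [|n] /= hi; lia.
Qed.

Lemma sorted_head_le s x : sorted ltn s -> x \in s -> head 0 s <= x.
Proof.
move=> so /mem_nthP[i hi <-].
have -> : head 0 s = nth 0 s 0 by case: s hi so.
have so' : sorted leq s by apply: sub_sorted so => a b; exact: ltnW.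
apply: (sorted_leq_nth leq_trans leqnn) => //; rewrite ?unfold_in /=; exact: leq_ltn_trans (leq0n i) hi.
Qed.

Lemma occ_size sigma tau J : occurrence sigma tau J -> size J = size sigma.
Proof. by move=> [_ [_ [sz _]]]; rewrite size_map in sz. Qed.

Lemma occ_min sigma tau J y : is_partition sigma -> occurrence sigma tau J ->
  y \in J -> nth 0 tau (head 0 J) <= nth 0 tau y.
Proof.
move=> Ps oJ; have sz := occ_size oJ; move: oJ => [_ [_ [_ Hi]]].
move=> /mem_nthP[b hb <-].
have h0 : 0 < size J by lia.
have -> : head 0 J = nth 0 J 0 by case: (J) h0.
have := Hi 0 b; rewrite !size_map !(nth_map 0) // => ->; try lia.
have [_ e0] := Ps 0 (ltac:(lia)).
have [e1 _] := Ps b (ltac:(lia)).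
rewrite take0 /= in e0; lia.
Qed.

Lemma part1 rho sigma tau I H : is_partition sigma -> is_partition tau ->
  noncrossing tau -> leftmost_occ rho tau I ->
  occurrence (pconcat rho sigma) tau H ->
  occurrence (pconcat rho sigma) tau (I ++ drop (size rho) H).
Proof.
move=> Ps Pt NC [oI lm] oH.
have [o1 o2 cr] := occ_split Ps oH.
have sH : sorted ltn (take (size rho) H ++ drop (size rho) H)
  by rewrite cat_take_drop; exact: oH.1.
move: (sH); rewrite (sorted_pairwise ltn_trans) pairwise_cat => /and3P[/allrelP aH _ _].
have leI := lm _ o1.
have szI := occ_size oI; have sz1 := occ_size o1.
have aT := oH.2.1.
apply: occ_join => // x y xI yH2;
have hm : last 0 (take (size rho) H) \in take (size rho) H by
  apply: last_mem; rewrite sz1 -szI; case: (I) xI.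
  exact: leq_ltn_trans (leq_trans (sorted_le_last oI.1 xI) leI) (aH _ _ hm yH2).
rewrite ltnNge; apply/negP => le.
have c := cr _ _ hm yH2.
have xh : x <= last 0 (take (size rho) H) := leq_trans (sorted_le_last oI.1 xI) leI.
have hy := aH _ _ hm yH2.
have ys : y < size tau by move/allP: aT; apply; rewrite -(cat_take_drop (size rho) H) mem_cat yH2 orbT.
move: xh; rewrite leq_eqVlt => /orP[/eqP ex|xh].
  by move: le; rewrite ex leqNgt c.
exact: (cross Pt NC xh hy ys c le).
Qed.

Lemma part2 rho sigma tau J H : is_partition sigma -> is_partition tau ->
  noncrossing tau -> topmost_occ sigma tau J ->
  occurrence (pconcat rho sigma) tau H ->
  occurrence (pconcat rho sigma) tau (take (size rho) H ++ J).
Proof.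
move=> Ps Pt NC [oJ tm] oH.
have [o1 o2 cr] := occ_split Ps oH.
have sH : sorted ltn (take (size rho) H ++ drop (size rho) H)
  by rewrite cat_take_drop; exact: oH.1.
move: (sH); rewrite (sorted_pairwise ltn_trans) pairwise_cat => /and3P[/allrelP aH _ _].
have tmH := tm _ o2.
have szJ := occ_size oJ; have sz2 := occ_size o2.
have aT := oH.2.1.
have aJ := oJ.2.1.
have key : forall x y, x \in take (size rho) H -> y \in J ->
  [/\ head 0 (drop (size rho) H) \in drop (size rho) H,
   nth 0 tau x < nth 0 tau (head 0 (drop (size rho) H)) &
   nth 0 tau (head 0 J) <= nth 0 tau y].
  move=> x y xH1 yJ.
  have hm : head 0 (drop (size rho) H) \in drop (size rho) H.
    by apply: head_mem; rewrite sz2 -szJ; case: (J) yJ.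
  by split => //; [exact: cr | exact: occ_min Ps oJ yJ].
apply: occ_join => // x y xH1 yJ; have [hm c mJ] := key _ _ xH1 yJ.
- apply: leq_trans (sorted_head_le oJ.1 yJ).
  rewrite ltnNge; apply/negP => jx.
  have j1J : head 0 J \in J by apply: head_mem; case: (J) yJ.
  have hs : head 0 (drop (size rho) H) < size tau.
    by move/allP: aT; apply; exact: mem_drop hm.
  have xh := aH _ _ xH1 hm.
  move: jx; rewrite leq_eqVlt => /orP[/eqP ex|jx].
    by move: tmH; rewrite ex leqNgt c.
  exact: (cross Pt NC jx xh hs c tmH).
- exact: leq_trans c (leq_trans tmH mJ).
Qed.

Theorem lemma3p1 (rho sigma tau I J H : seq nat) :
  is_partition rho -> is_partition sigma -> is_partition tau ->
  noncrossing rho -> noncrossing sigma -> noncrossing tau ->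
  leftmost_occ rho tau I -> topmost_occ sigma tau J ->
  occurrence (pconcat rho sigma) tau H ->
  [/\ occurrence (pconcat rho sigma) tau (I ++ drop (size rho) H),
      occurrence (pconcat rho sigma) tau (take (size rho) H ++ J)
    & (exists H', occurrence (pconcat rho sigma) tau H') <->
      occurrence (pconcat rho sigma) tau (I ++ J)].
Proof.
move=> PR PS PT NCr NCs NCt L T0 oH.
split; first exact: part1 oH.
  exact: part2 oH.
split => [[H' oH']|o]; last by exists (I ++ J).
have o' := part1 PS PT NCt L oH'.
have := part2 PS PT NCt T0 o'.
by rewrite take_size_cat //; exact: occ_size L.1.
Qed.
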